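(* Let $p\geq1$ be an integer, $\tau>0$, and $w=(w_0,\dots,w_{p-1})$ with all $w_j>0$ and $\sum_{j=0}^{p-1}w_j=1$. Let $M_w:E\to E$ be the weighted moving average defined on $E=l^\infty(\mathbb{N})$ by $M_w(x)=y$ with $$y_n=\frac{\sum_{j=p-1-n}^{p-1}w_jx_{n-p+1+j}}{\sum_{j=p-1-n}^{p-1}w_j}\ (0\le n\le p-2),\qquad y_n=\sum_{j=0}^{p-1}w_jx_{n-p+1+j}\ (n\geq p-1).$$ Then for every polynomial $P=\sum_{k=0}^da_kX^k\in\mathbb{R}[X]$, $$lag(P(M_w))=lag(M_w)\sum_{k=0}^d k a_k=lag(M_w)\,P'(1).$$
   Context: Here $P(M_w)=\sum_k a_k M_w^k$ (with $M_w^0=\mathrm{id}$). For every $k$, $M_w^k(x)_n=\sum_{i_1,\dots,i_k=0}^{p-1}w_{i_1}\cdots w_{i_k}x_{n-k(p-1)+i_1+\cdots+i_k}$ for $n\ge k(p-1)$, so $P(M_w)$ acts, for all $n\geq d(p-1)$, as a fixed finite weighted sum of $x_{n-q+1},\dots,x_n$ with $q=d(p-1)+1$. Lag: if $M:E\to E$ is linear and there are an integer $q\ge1$ and reals $v_0,\dots,v_{q-1}$ such that $M(x)_n=\sum_{j=0}^{q-1}v_jx_{n-q+1+j}$ for all $x\in E$ and all $n\geq q-1$, then $lag(M)=\tau\sum_{j=0}^{q-1}v_j(q-1-j)$, where $\tau>0$ is the fixed time step between consecutive observations. *)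

(* Defs.v *)
From HB Require Import structures.
From mathcomp Require Import all_boot all_order all_algebra.
From mathcomp Require Import reals.
Set Implicit Arguments. Unset Strict Implicit. Unset Printing Implicit Defensive.
Import Order.TTheory GRing.Theory Num.Theory.
Local Open Scope ring_scope.

(* Sequences indexed by nat; E = l^oo(N) is the set of bounded sequences. *)
Definition bounded (R : realType) (x : nat -> R) : Prop :=
  exists B : R, forall n, `|x n| <= B.

(* Weighted moving average M_w with weights w_0..w_{p-1} (w j, j < p).
   The index n-p+1+j is written (n + 1 + j - p)%N; it is never truncated
   in the ranges used. *)
Definition Mw (R : realType) (p : nat) (w : nat -> R) (x : nat -> R) (n : nat) : R :=
  if (n < p.-1)%N then
    (\sum_(j < p | (p.-1 - n <= j)%N) w j * x (n.+1 + j - p)%N) /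
    (\sum_(j < p | (p.-1 - n <= j)%N) w j)
  else \sum_(j < p) w j * x (n.+1 + j - p)%N.

Definition poly_op (R : realType) (P : {poly R})
    (M : (nat -> R) -> (nat -> R)) (x : nat -> R) (n : nat) : R :=
  \sum_(k < size P) P`_k * iter k M x n.

Definition linear_on_E (R : realType) (M : (nat -> R) -> (nat -> R)) : Prop :=
  (forall x, bounded x -> bounded (M x)) /\
  (forall (a : R) x y, bounded x -> bounded y ->
     M (fun n => a * x n + y n) = (fun n => a * M x n + M y n)).

Definition is_lag (R : realType) (tau : R) (M : (nat -> R) -> (nat -> R)) (L : R) : Prop :=
  linear_on_E M /\
  exists (q : nat) (v : nat -> R),
    (1 <= q)%N /\
    (forall x, bounded x -> forall n, (q.-1 <= n)%N ->
        M x n = \sum_(j < q) v j * x (n.+1 + j - q)%N) /\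
    L = tau * \sum_(j < q) v j * (q.-1 - j)%:R.

(* Main.v *)
Require Import Defs.
From HB Require Import structures.
From mathcomp Require Import all_boot all_order all_algebra.
From mathcomp Require Import reals.
From mathcomp Require Import boolp zify.
Import Order.TTheory GRing.Theory Num.Theory.
Local Open Scope ring_scope.
Set Implicit Arguments. Unset Strict Implicit.

Section Aux.
Variable R : realType.
Implicit Types (h g : {poly R}) (x : nat -> R).

Definition conv h x (n : nat) : R := \sum_(e < n.+1) h`_e * x (n - e)%N.

Lemma sum_rev (F : nat -> R) K :
  \sum_(i < K) F i = \sum_(i < K) F (K.-1 - i)%N.
Proof.
rewrite (reindex_inj rev_ord_inj) /=; apply: eq_bigr => i _.
congr F; have := ltn_ord i; lia.
Qed.

Lemma conv_coef g x n m : (m <= n)%N ->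
  conv g x m = (g * \poly_(i < n.+1) x i)`_m.
Proof.
move=> hm; rewrite coefM /conv; apply: eq_bigr => i _.
rewrite coef_poly; case: ifP => // /negP; have := ltn_ord i; lia.
Qed.

Lemma conv_mul h g x n : conv h (conv g x) n = conv (h * g) x n.
Proof.
rewrite (@conv_coef (h * g) x n n (leqnn n)) -mulrA coefM; rewrite {1}/conv; apply: congr_big => // i _.
by rewrite (@conv_coef _ _ n) // leq_subr.
Qed.

Lemma conv_trunc h x n K : (forall e, (K <= e)%N -> h`_e = 0) -> (K <= n.+1)%N ->
  conv h x n = \sum_(e < K) h`_e * x (n - e)%N.
Proof.
move=> hz hK; rewrite /conv (big_ord_widen _ (fun e => h`_e * x (n - e)%N) hK).
rewrite [RHS]big_mkcond /=; apply: eq_bigr => i _.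
by case: ifP => // /negbT; rewrite -leqNgt => /hz ->; rewrite mul0r.
Qed.

Lemma conv_sum m (c : nat -> R) (G : nat -> {poly R}) x n :
  conv (\sum_(k < m) c k *: G k) x n = \sum_(k < m) c k * conv (G k) x n.
Proof.
rewrite /conv; under eq_bigr => e _ do rewrite coef_sum mulr_suml.
rewrite exchange_big /=; apply: eq_bigr => k _.
by rewrite mulr_sumr; apply: eq_bigr => e _; rewrite coefZ mulrA.
Qed.

Lemma conv1 x n : conv 1 x n = x n.
Proof.
rewrite /conv big_ord_recl /= coef1 /= mul1r subn0 big1 ?addr0 // => i _.
by rewrite coef1 /= mul0r.
Qed.

Lemma deriv1 h K : (forall e, (K <= e)%N -> h`_e = 0) ->
  h^`().[1] = \sum_(e < K) h`_e * e%:R.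
Proof.
move=> hz.
have hs : (size h^`() <= K)%N.
  by apply/leq_sizeP => j hj; rewrite coef_deriv hz ?mul0rn //; lia.
rewrite (horner_coef_wide _ hs).
case: K hz hs => [|K] hz hs; first by rewrite !big_ord0.
rewrite big_ord_recr big_ord_recl /= mulr0 add0r coef_deriv hz // mul0rn mul0r addr0.
by apply: eq_bigr => i _; rewrite coef_deriv expr1n mulr1 mulr_natr /bump leq0n add1n.
Qed.

Lemma horner1 h K : (size h <= K)%N -> h.[1] = \sum_(e < K) h`_e.
Proof.
move=> hs; rewrite (horner_coef_wide _ hs); apply: eq_bigr => i _.
by rewrite expr1n mulr1.
Qed.

End Aux.
Section Lag.
Variable R : realType.

Lemma lag_rep (tau : R) (M : (nat -> R) -> nat -> R) (h : {poly R}) N :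
  linear_on_E M -> (forall x n, (N <= n)%N -> M x n = conv h x n) ->
  is_lag tau M (tau * h^`().[1]) /\
  (forall L, is_lag tau M L -> L = tau * h^`().[1]).
Proof.
move=> hlin hrep; split.
  split=> //.
  have [K [hNK hSK]] : exists K, (N <= K)%N /\ (size h <= K)%N.
    by exists (maxn N (size h)); rewrite leq_maxl leq_maxr.
  pose q := K.+1.
  have hz : forall e, (q <= e)%N -> h`_e = 0.
    by move=> e he; apply: nth_default; apply: leq_trans hSK (ltnW he).
  exists q, (fun j => h`_(q.-1 - j)); split => //; split.
    move=> x _ n hn; rewrite hrep; last by rewrite /q /= in hn; lia.
    rewrite (@conv_trunc _ h x n q hz); last by rewrite /q /= in hn *; lia.
    rewrite (sum_rev (fun e => h`_e * x (n - e)%N)); apply: eq_bigr => i _; congr (_ * x _).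
    have := ltn_ord i; rewrite /q /= in hn *; lia.
  by rewrite (deriv1 hz) (sum_rev (fun e => h`_e * e%:R)).
move=> L [_ [q [v [hq [hr hL]]]]].
have hc : forall d, h`_d = if (d < q)%N then v (q.-1 - d)%N else 0.
  move=> d.
  pose n := (d + N + q)%N; pose m := (n - d)%N.
  pose x := fun i : nat => if i == m then (1 : R) else 0.
  have bx : bounded x.
    exists 1 => i; rewrite /x; case: ifP => _; rewrite ?normr1 ?normr0 //.
  have e1 : M x n = h`_d.
    rewrite hrep; last by rewrite /n; lia.
    have hd : (d < n.+1)%N by rewrite /n; lia.
    rewrite /conv (bigD1 (Ordinal hd)) //= /x eqxx mulr1 big1 ?addr0 // => i hi.
    case: ifP; last by rewrite mulr0.
    move/eqP => E; exfalso; move/eqP: hi; apply; apply: val_inj => /=.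
    have := ltn_ord i; rewrite /m /n in E *; lia.
  rewrite -e1 hr //; last by rewrite /n; lia.
  case: ifP => hdq.
    have hj : (q.-1 - d < q)%N by lia.
    rewrite (bigD1 (Ordinal hj)) //= /x.
    rewrite ifT; last by apply/eqP; rewrite /m /n; lia.
    rewrite mulr1 big1 ?addr0 // => i hi.
    case: ifP; last by rewrite mulr0.
    move/eqP => E; exfalso; move/eqP: hi; apply; apply: val_inj => /=.
    have := ltn_ord i; rewrite /m /n in E *; lia.
  apply: big1 => i _; rewrite /x; case: ifP; last by rewrite mulr0.
  move/eqP => E; exfalso; have := ltn_ord i; rewrite /m /n in E *; lia.
have hz : forall e, (q <= e)%N -> h`_e = 0.
  by move=> e he; rewrite hc ifF //; apply/negbTE; rewrite -leqNgt.
rewrite hL (deriv1 hz) (sum_rev (fun e => h`_e * e%:R)); congr (_ * _); apply: eq_bigr => i _.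
rewrite hc ifT; last by have := ltn_ord i; lia.
congr (v _ * _); have := ltn_ord i; lia.
Qed.

End Lag.
From mathcomp Require Import lra.

Section Main.
Variable R : realType.

Lemma bounded_sum m (F : nat -> nat -> R) :
  (forall k, bounded (F k)) -> bounded (fun n => \sum_(k < m) F k n).
Proof.
move=> hF; elim: m => [|m [B hB]].
  by exists 0 => n; rewrite big_ord0 normr0.
have [C hC] := hF m; exists (B + C) => n; rewrite big_ord_recr /=.
by apply: le_trans (ler_normD _ _) _; apply: lerD.
Qed.

Lemma bounded_scale (c : R) x : bounded x -> bounded (fun n => c * x n).
Proof.
move=> [B hB]; exists (`|c| * B) => n; rewrite normrM.
by apply: ler_wpM2l.
Qed.

Lemma linear_iter (M : (nat -> R) -> nat -> R) k :
  linear_on_E M -> linear_on_E (iter k M).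
Proof.
move=> [Mb Ml]; elim: k => [|k [IHb IHl]]; first by split.
split; first by move=> x bx /=; apply: Mb; apply: IHb.
by move=> a x y bx bxy /=; rewrite IHl // Ml //; apply: IHb.
Qed.

Lemma linear_poly (M : (nat -> R) -> nat -> R) (P : {poly R}) :
  linear_on_E M -> linear_on_E (poly_op P M).
Proof.
move=> hM; split.
  move=> x bx; rewrite /poly_op.
  have hF : forall k, bounded (fun n => P`_k * iter k M x n).
    by move=> k; apply: bounded_scale; case: (linear_iter k hM) => hb _; apply: hb.
  exact: (bounded_sum (size P) hF).
move=> a x y bx byy; apply: funext => n; rewrite /poly_op.
under eq_bigr => k _.
  by case: (linear_iter k hM) => _ hl; rewrite hl //; over.
rewrite mulr_sumr -big_split /=; apply: eq_bigr => k _.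
by rewrite mulrDr mulrCA.
Qed.

Lemma linear_Mw p (w : nat -> R) : linear_on_E (Mw p w).
Proof.
split.
  move=> x [B hB].
  have B0 : 0 <= B by apply: le_trans (hB 0%N); apply: normr_ge0.
  have S0 : 0 <= \sum_(m < p) `|Mw p w x m| by apply: sumr_ge0 => *; apply: normr_ge0.
  have T0 : 0 <= B * \sum_(j < p) `|w j|.
    by apply: mulr_ge0 => //; apply: sumr_ge0 => *; apply: normr_ge0.
  exists (\sum_(m < p) `|Mw p w x m| + B * \sum_(j < p) `|w j|) => n.
  case hn: (n < p.-1)%N.
    have hnp : (n < p)%N by lia.
    have : `|Mw p w x n| <= \sum_(m < p) `|Mw p w x m|.
      rewrite (bigD1 (Ordinal hnp)) //=.
      have : 0 <= \sum_(i < p | i != Ordinal hnp) `|Mw p w x i|.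
        by apply: sumr_ge0 => *; apply: normr_ge0.
      lra.
    lra.
  have : `|Mw p w x n| <= B * \sum_(j < p) `|w j|.
    rewrite /Mw hn; apply: le_trans (ler_norm_sum _ _ _) _.
    rewrite mulr_sumr; apply: ler_sum => j _; rewrite normrM [in X in _ <= X]mulrC.
    by apply: ler_wpM2l; [apply: normr_ge0 | apply: hB].
  lra.
move=> a x y _ _; apply: funext => n; rewrite /Mw; case: ifP => _.
  under eq_bigr => j _ do rewrite mulrDr mulrCA.
  by rewrite big_split /= -mulr_sumr mulrDl mulrA.
under eq_bigr => j _ do rewrite mulrDr mulrCA.
by rewrite big_split /= -mulr_sumr.
Qed.

Definition Wp p (w : nat -> R) : {poly R} := \poly_(d < p) w (p.-1 - d)%N.

Lemma Mw_rep p (w : nat -> R) x n : (p.-1 <= n)%N -> Mw p w x n = conv (Wp p w) x n.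
Proof.
move=> hn.
have hz : forall e, (p <= e)%N -> (Wp p w)`_e = 0.
  by move=> e he; rewrite coef_poly ifF //; apply/negbTE; rewrite -leqNgt.
rewrite (@conv_trunc _ _ x n p hz); last by lia.
rewrite /Mw ifF; last by apply/negbTE; rewrite -leqNgt.
rewrite (sum_rev (fun j => w j * x (n.+1 + j - p)%N)).
apply: eq_bigr => i _; rewrite coef_poly ltn_ord; congr (_ * x _).
have := ltn_ord i; lia.
Qed.

Lemma iter_rep p (w : nat -> R) k x n : (k * p.-1 <= n)%N ->
  iter k (Mw p w) x n = conv (Wp p w ^+ k) x n.
Proof.
elim: k n => [|k IH] n hn; first by rewrite expr0 conv1.
rewrite iterS Mw_rep; last by rewrite mulSn in hn; apply: leq_trans hn; apply: leq_addr.
rewrite exprS -conv_mul /conv; apply: eq_bigr => i _.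
case hip: (i < p)%N.
  by rewrite IH //; rewrite mulSn in hn; lia.
by rewrite coef_poly hip !mul0r.
Qed.

Lemma poly_rep p (w : nat -> R) (P : {poly R}) x n : (size P * p.-1 <= n)%N ->
  poly_op P (Mw p w) x n = conv (P \Po Wp p w) x n.
Proof.
move=> hn; rewrite comp_polyE conv_sum /poly_op; apply: eq_bigr => k _.
rewrite iter_rep //; apply: leq_trans hn; apply: leq_mul => //.
exact: ltnW.
Qed.

End Main.

Theorem proposition4 (R : realType) (p : nat) (tau : R) (w : nat -> R)
  (hp : (1 <= p)%N) (htau : 0 < tau)
  (hw : forall j, (j < p)%N -> 0 < w j)
  (hsum : \sum_(j < p) w j = 1)
  (P : {poly R}) :
  (exists L1, is_lag tau (Mw p w) L1) /\
  (exists L2, is_lag tau (poly_op P (Mw p w)) L2) /\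
  (forall L1 L2, is_lag tau (Mw p w) L1 ->
     is_lag tau (poly_op P (Mw p w)) L2 ->
     L2 = L1 * \sum_(k < size P) k%:R * P`_k /\
     L2 = L1 * (P^`()).[1]).
Proof.
have [a1 u1] := lag_rep tau (linear_Mw p w) (@Mw_rep R p w).
have [a2 u2] := lag_rep tau (linear_poly P (linear_Mw p w)) (@poly_rep R p w P).
split; first by exists (tau * (Wp p w)^`().[1]).
split; first by exists (tau * (P \Po Wp p w)^`().[1]).
move=> L1 L2 h1 h2; rewrite (u1 _ h1) (u2 _ h2).
have W1 : (Wp p w).[1] = 1.
  rewrite (horner1 (size_poly _ _)) -hsum (sum_rev w).
  by apply: eq_bigr => i _; rewrite coef_poly ltn_ord.
have E : (P \Po Wp p w)^`().[1] = P^`().[1] * (Wp p w)^`().[1].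
  by rewrite deriv_comp hornerM horner_comp W1.
have D : P^`().[1] = \sum_(k < size P) k%:R * P`_k.
  rewrite (@deriv1 _ P (size P)); last by move=> e he; apply: nth_default.
  by apply: eq_bigr => i _; rewrite mulrC.
rewrite E -D; split; by rewrite mulrCA mulrA [_ * P^`().[1]]mulrC -mulrA.
Qed.
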